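(* Let $N\ge3$. For every $\gamma\in(\mathbb{Z}/N\mathbb{Z})^\times$, $\tilde\delta_\gamma(\mathfrak{dmr}_0^{[N]})\subset\mathfrak{dmr}_0^{[N]}$ and $\delta_\gamma(\mathfrak{dmr}_0^{\mu_N})\subset\mathfrak{dmr}_0^{\mu_N}$.
   Context: $\mu_N$ the complex $N$-th roots of unity, $\iota:\{1,\dots,N\}\to\mathbb{Z}/N\mathbb{Z}$ the residue-class bijection. $\mathbb{Q}\langle\langle\mathcal L\rangle\rangle$: noncommutative formal power series over $\mathcal L$; $(\psi\mid w)$ the coefficient of the word $w$. Alphabets $X=\{x_0\}\cup\{x_\zeta:\zeta\in\mu_N\}$, $Y=\{y_{k,\zeta}:k\ge1,\zeta\in\mu_N\}$, $\widetilde X=\{\tilde x\}\cup\{\tilde x_\alpha:\alpha\in\mathbb{Z}/N\mathbb{Z}\}$, $\widetilde Y=\{\tilde y_{k,\alpha}:k\ge1,\alpha\in\mathbb{Z}/N\mathbb{Z}\}$, with $y_{k,\zeta}\equiv x_0^{k-1}x_\zeta$, $\tilde y_{k,\alpha}\equiv\tilde x^{k-1}\tilde x_\alpha$; $\pi_Y$ (resp. $\pi_{\widetilde Y}$) is the projection of $\mathbb{Q}\langle\langle X\rangle\rangle=\mathbb{Q}\langle\langle Y\rangle\rangle\oplus\mathbb{Q}\langle\langle X\rangle\rangle x_0$ (resp. $\mathbb{Q}\langle\langle\widetilde X\rangle\rangle=\mathbb{Q}\langle\langle\widetilde Y\rangle\rangle\oplus\mathbb{Q}\langle\langle\widetilde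 X\rangle\rangle\tilde x$) onto the first summand. Coproducts: $\widehat\Delta_{sh}$, $\widehat\Delta_{\tilde{sh}}$ make all letters of $X$, $\widetilde X$ primitive; $\widehat\Delta_*(y_{k,\zeta})=y_{k,\zeta}\otimes1+1\otimes y_{k,\zeta}+\sum_{k_1+k_2=k,\,k_i\ge1,\,\zeta_1\zeta_2=\zeta}y_{k_1,\zeta_1}\otimes y_{k_2,\zeta_2}$; $\widehat\Delta_{\tilde*}(\tilde y_{k,\alpha})=\tilde y_{k,\alpha}\otimes1+1\otimes\tilde y_{k,\alpha}+\sum_{k_1+k_2=k,\,k_i\ge1}\tilde y_{k_1,\alpha}\otimes\tilde y_{k_2,\alpha}$. Linear maps: $\mathbf p(x_0^{k_1-1}x_{\zeta_1}\cdots x_0^{k_r-1}x_{\zeta_r}x_0^{k_{r+1}-1})=x_0^{k_1-1}x_{\zeta_1}x_0^{k_2-1}x_{\zeta_1\zeta_2}\cdots x_0^{k_r-1}x_{\zeta_1\cdots\zeta_r}x_0^{k_{r+1}-1}$; $\widetilde{\mathbf q}(\tilde x^{k_1-1}\tilde x_{\alpha_1}\cdots\tilde x^{k_r-1}\tilde x_{\alpha_r}\tilde x^{k_{r+1}-1})=\tilde x^{k_1-1}\tilde x_{\alpha_1-\alpha_2}\cdots\tilde x^{k_{r-1}-1}\tilde x_{\alpha_{r-1}-\alpha_r}\tilde x^{k_r-1}\tilde x_{\alpha_r}\tilde x^{k_{r+1}-1}$. $\mathfrak{dmr}_0^{\mu_N}$: the $\psi\in\mathbb{Q}\langle\langle X\rangle\rangle$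 with (i) $(\psi\mid x_0)=(\psi\mid x_1)=0$; (ii) $\psi$ primitive for $\widehat\Delta_{sh}$; (iii) $(\psi\mid x_\zeta-x_{\zeta^{-1}})=0$ for all $\zeta\in\mu_N$; (iv) $\psi_*:=\pi_Y\mathbf p^{-1}(\psi)+\sum_{n\ge2}\frac{(-1)^{n-1}}{n}(\psi\mid x_0^{n-1}x_1)y_{1,1}^n$ primitive for $\widehat\Delta_*$. $\mathfrak{dmr}_0^{[N]}$: the $\widetilde\psi\in\mathbb{Q}\langle\langle\widetilde X\rangle\rangle$ with (i) $(\widetilde\psi\mid\tilde x)=\sum_\alpha(\widetilde\psi\mid\tilde x_\alpha)=0$; (ii) $\widetilde\psi$ primitive for $\widehat\Delta_{\tilde{sh}}$; (iii) $(\widetilde\psi\mid\tilde x_\alpha-\tilde x_{-\alpha})=0$ for all $\alpha$; (iv) $\widetilde\psi_{\tilde*}:=\pi_{\widetilde Y}\widetilde{\mathbf q}^{-1}(\widetilde\psi)+\sum_{n\ge2}\sum_{a,b_1,\dots,b_n=1}^N\frac{(-1)^{n-1}}{nN^{n+1}}(\widetilde\psi\mid\tilde x^{n-1}\tilde x_{\iota(a)})\tilde y_{1,\iota(b_1)}\cdots\tilde y_{1,\iota(b_n)}$ primitive for $\widehat\Delta_{\tilde*}$. For $\gamma\in(\mathbb{Z}/N\mathbb{Z})^\times$: $\delta_\gamma$ is the algebra automorphism of $\mathbb{Q}\langle\langle X\rangle\rangle$ with $x_0\mapsto x_0$, $x_\zeta\mapsto x_{\zeta^{\iota^{-1}(\gamma)}}$;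 $\tilde\delta_\gamma$ is the algebra automorphism of $\mathbb{Q}\langle\langle\widetilde X\rangle\rangle$ with $\tilde x\mapsto\tilde x$, $\tilde x_\alpha\mapsto\tilde x_{\gamma\alpha}$. *)

(* Defs.v *)
From HB Require Import structures.
From mathcomp Require Import all_boot all_order all_algebra.
Set Implicit Arguments. Unset Strict Implicit. Unset Printing Implicit Defensive.
Import Order.TTheory GRing.Theory Num.Theory.
Local Open Scope ring_scope.

(* Noncommutative formal power series Q<<L>> : a series is the function     *)
(* w |-> (psi | w) on words (seq L).                                         *)
Definition series (L : Type) := seq L -> rat.

Definition b2q (b : bool) : rat := if b then 1 else 0.

(* Coproducts.  A coproduct on Q<<L>> which is an algebra morphism and is    *)
(* given on letters by                                                       *)
(*    Delta(a) = a (x) 1 + 1 (x) a + sum_{b,c | contr a b c} b (x) c         *)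
(* Its value on a word w, as an element of Q<L> (x) Q<L>, is represented by  *)
(* its coefficient function (u,v) |-> (Delta(w) | u (x) v); the recursion is *)
(* Delta(a w) = Delta(a) Delta(w).                                           *)
Fixpoint deltaw (L : eqType) (contr : L -> L -> L -> bool) (w u v : seq L)
  : rat :=
  match w with
  | [::] => b2q ((u == [::]) && (v == [::]))
  | a :: w' =>
      (match u with b :: u' => b2q (b == a) * deltaw contr w' u' v
                  | [::] => 0 end)
    + (match v with c :: v' => b2q (c == a) * deltaw contr w' u v'
                  | [::] => 0 end)
    + (match u, v with
       | b :: u', c :: v' => b2q (contr a b c) * deltaw contr w' u' v'
       | _, _ => 0 end)
  end.

Fixpoint words_over (L : Type) (s : seq L) (n : nat) : seq (seq L) :=
  match n with
  | 0 => [:: [::]]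
  | n'.+1 => [seq a :: w | a <- s, w <- words_over s n']
  end.

Definition words_upto (L : Type) (s : seq L) (m : nat) : seq (seq L) :=
  flatten [seq words_over s n | n <- iota 0 m.+1].

(* (Delta psi | u (x) v) = sum_w (psi | w) (Delta w | u (x) v).  The sum is  *)
(* taken over a finite list of words which contains every w with            *)
(* (Delta w | u (x) v) <> 0: such w have length <= |u|+|v| and letters in    *)
(* [letters u v] (supplied per alphabet below).                              *)
Definition coprod (L : eqType) (letters : seq L -> seq L -> seq L)
  (contr : L -> L -> L -> bool) (psi : series L) (u v : seq L) : rat :=
  \sum_(w <- words_upto (letters u v) (size u + size v))
     psi w * deltaw contr w u v.

Definition primitive (L : eqType) (letters : seq L -> seq L -> seq L)
  (contr : L -> L -> L -> bool) (psi : series L) : Prop :=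
  forall u v : seq L,
    coprod letters contr psi u v = psi u * b2q (v == [::]) + b2q (u == [::]) * psi v.

(*  X-letters : option 'Z_N.  None = x_0,  Some k = x_zeta with              *)
(*     zeta = exp(2 pi i k / N)  (mu_N is encoded by exponents in Z/NZ, so   *)
(*     zeta1 zeta2 <-> k1 + k2, zeta^-1 <-> -k, 1 <-> 0, zeta^m <-> k *+ m). *)
(*  X~-letters : also option 'Z_N.  None = x~, Some a = x~_a.                *)
(*  Y-letters (and Y~-letters) : nat * 'Z_N ;  (k', z) = y_{k'+1, z}.        *)
Definition XL (N : nat) := option 'Z_N.
Definition YL (N : nat) := (nat * 'Z_N)%type.

Definition Xletters (N : nat) : seq (XL N) := enum {: option 'Z_N}.

(* shuffle coproduct: all letters primitive *)
Definition contr_sh (L : Type) (a b c : L) : bool := false.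
Definition Xcand (N : nat) (u v : seq (XL N)) : seq (XL N) := Xletters N.

Definition Ycand (N : nat) (u v : seq (YL N)) : seq (YL N) :=
  [seq (k, z) | k <- iota 0 (sumn [seq l.1.+1 | l <- u ++ v]), z <- enum 'Z_N].

(* Delta_* : y_{k,zeta} -> ... + sum_{k1+k2=k, zeta1 zeta2 = zeta} y_{k1,zeta1} (x) y_{k2,zeta2} *)
Definition contr_star (N : nat) (a b c : YL N) : bool :=
  (a.1 == b.1 + c.1 + 1)%N && (a.2 == b.2 + c.2).
(* Delta_*~ : y~_{k,a} -> ... + sum_{k1+k2=k} y~_{k1,a} (x) y~_{k2,a} *)
Definition contr_tstar (N : nat) (a b c : YL N) : bool :=
  [&& (a.1 == b.1 + c.1 + 1)%N, b.2 == a.2 & c.2 == a.2].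

(* y_{k,z} == x_0^{k-1} x_z : embedding of Y-words into X-words *)
Definition toX (N : nat) (w : seq (YL N)) : seq (XL N) :=
  flatten [seq rcons (nseq l.1 None) (Some l.2) | l <- w].

Fixpoint pword_acc (N : nat) (acc : 'Z_N) (w : seq (XL N)) : seq (XL N) :=
  match w with
  | [::] => [::]
  | None :: w' => None :: pword_acc acc w'
  | Some z :: w' => Some (acc + z) :: pword_acc (acc + z) w'
  end.
Definition pword (N : nat) (w : seq (XL N)) : seq (XL N) := pword_acc 0 w.

Fixpoint nextS (N : nat) (w : seq (XL N)) : 'Z_N :=
  match w with
  | [::] => 0
  | None :: w' => nextS w'
  | Some a :: _ => a
  end.
Fixpoint qword (N : nat) (w : seq (XL N)) : seq (XL N) :=
  match w with
  | [::] => [::]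
  | None :: w' => None :: qword w'
  | Some a :: w' => Some (a - nextS w') :: qword w'
  end.

Definition iotaN (N : nat) (a : nat) : 'Z_N := a%:R.
Definition iotaN_inv (N : nat) (g : 'Z_N) : nat :=
  if (val g == 0)%N then N else val g.

(* psi_* = pi_Y p^{-1}(psi) + sum_{n>=2} (-1)^{n-1}/n (psi|x_0^{n-1}x_1) y_{1,1}^n.
   Since p is a bijection on words, (p^{-1} psi | w) = (psi | p w). *)
Definition psi_star (N : nat) (psi : series (XL N)) : series (YL N) :=
  fun w =>
    psi (pword (toX w))
    + (if (2 <= size w)%N && all (fun l => l == ((0%N, 0) : YL N)) w
       then (-1) ^+ (size w).-1 / (size w)%:R
            * psi (rcons (nseq (size w).-1 None) (Some 0))
       else 0).

(* psi~_{*~} = pi_Y~ q~^{-1}(psi) + sum_{n>=2} sum_{a,b_1..b_n}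
     (-1)^{n-1}/(n N^{n+1}) (psi | x~^{n-1} x~_{iota a}) y~_{1,iota b1}..y~_{1,iota bn} *)
Definition psi_tstar (N : nat) (psi : series (XL N)) : series (YL N) :=
  fun w =>
    psi (qword (toX w))
    + (if (2 <= size w)%N && all (fun l => l.1 == 0%N) w
       then (-1) ^+ (size w).-1 / ((size w)%:R * (N%:R) ^+ (size w).+1)
            * \sum_(a < N) psi (rcons (nseq (size w).-1 None) (Some (iotaN N a.+1)))
       else 0).

Definition dmr_mu (N : nat) (psi : series (XL N)) : Prop :=
  [/\ psi [:: None] = 0 /\ psi [:: Some 0] = 0,
      primitive (@Xcand N) (@contr_sh (XL N)) psi,
      (forall z : 'Z_N, psi [:: Some z] = psi [:: Some (- z)])
    & primitive (@Ycand N) (@contr_star N) (psi_star psi)].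

Definition dmr_tilde (N : nat) (psi : series (XL N)) : Prop :=
  [/\ psi [:: None] = 0 /\ \sum_(a : 'Z_N) psi [:: Some a] = 0,
      primitive (@Xcand N) (@contr_sh (XL N)) psi,
      (forall a : 'Z_N, psi [:: Some a] = psi [:: Some (- a)])
    & primitive (@Ycand N) (@contr_tstar N) (psi_tstar psi)].

(* algebra morphism induced by a letter substitution sigma (continuous):
   (delta psi | w) = sum_{w' | sigma(w') = w} (psi | w') *)
Definition subst_series (N : nat) (sigma : XL N -> XL N) (psi : series (XL N))
  : series (XL N) :=
  fun w => \sum_(w' <- words_over (Xletters N) (size w) | map sigma w' == w) psi w'.

(* delta_gamma : x_0 -> x_0, x_zeta -> x_{zeta^{iota^{-1} gamma}} *)
Definition delta_mu (N : nat) (g : 'Z_N) : series (XL N) -> series (XL N) :=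
  subst_series (fun l => match l with
                         | None => None
                         | Some z => Some (z *+ iotaN_inv g) end).

Definition delta_tilde (N : nat) (g : 'Z_N) : series (XL N) -> series (XL N) :=
  subst_series (fun l => match l with
                         | None => None
                         | Some a => Some (g * a) end).

(* Main.v *)
Require Import Defs.
From HB Require Import structures.
From mathcomp Require Import all_boot all_order all_algebra.
Import GRing.Theory.
Local Open Scope ring_scope.

From Stdlib Require Import FunctionalExtensionality.
Set Implicit Arguments. Unset Strict Implicit. Unset Printing Implicit Defensive.

Section Gen.
Variable L : eqType.

Lemma words_over_map (t : L -> L) s n :
  words_over (map t s) n = map (map t) (words_over s n).
Proof.
elim: n => [//|n IH] /=; rewrite IH map_allpairs allpairs_mapl allpairs_mapr //.
Qed.

Lemma words_upto_map (t : L -> L) s n :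
  words_upto (map t s) n = map (map t) (words_upto s n).
Proof.
rewrite /words_upto map_flatten -map_comp; congr flatten; apply: eq_map => k /=.
exact: words_over_map.
Qed.

Lemma perm_words_over (s1 s2 : seq L) n : perm_eq s1 s2 ->
  perm_eq (words_over s1 n) (words_over s2 n).
Proof. by move=> p; elim: n => [//|n IH] /=; apply: perm_allpairs. Qed.

Lemma perm_words_upto (s1 s2 : seq L) n : perm_eq s1 s2 ->
  perm_eq (words_upto s1 n) (words_upto s2 n).
Proof.
move=> p; rewrite /words_upto; elim: (iota 0 n.+1) => [//|k r IH] /=.
by apply: perm_cat => //; apply: perm_words_over.
Qed.

Lemma deltaw_map (t : L -> L) (ti : injective t) contr
  (hc : forall a b c, contr (t a) (t b) (t c) = contr a b c) w u v :
  deltaw contr (map t w) (map t u) (map t v) = deltaw contr w u v.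
Proof.
elim: w u v => [|a w IH] [|b u] [|c v] /=; rewrite ?IH ?(inj_eq ti) ?hc //.
- by rewrite -(IH [::] v).
- by rewrite -(IH u [::]).
- by rewrite -(IH u (c :: v)) -(IH (b :: u) v).
Qed.

Lemma primitive_map (t : L -> L) (ti : injective t) letters contr
  (hc : forall a b c, contr (t a) (t b) (t c) = contr a b c)
  (hl : forall u v, perm_eq (letters (map t u) (map t v)) (map t (letters u v)))
  psi : primitive letters contr psi ->
  primitive letters contr (fun w => psi (map t w)).
Proof.
move=> P u v; have := P (map t u) (map t v).
rewrite /coprod !size_map.
rewrite (perm_big _ (perm_words_upto _ (hl u v))) words_upto_map big_map.
under [X in X = _ -> _]eq_bigr do rewrite deltaw_map //.
by move=> ->; case: u; case: v.
Qed.
End Gen.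

Lemma perm_enum_bij (T : finType) (h : T -> T) : bijective h ->
  perm_eq (enum T) (map h (enum T)).
Proof.
case=> hi hK1 hK2; apply: uniq_perm; first exact: enum_uniq.
  by rewrite map_inj_uniq ?enum_uniq //; exact: can_inj hK1.
move=> x; rewrite mem_enum; apply/esym/mapP; exists (hi x); rewrite ?mem_enum //.
Qed.

Section Zp.
Variables (N : nat) (h hi : 'Z_N -> 'Z_N).
Hypotheses (hK : cancel h hi) (hiK : cancel hi h).
Hypothesis hD : forall a b, h (a + b) = h a + h b.

Lemma h0 : h 0 = 0.
Proof. by have := hD 0 0; rewrite addr0 => /(congr1 (fun x => x - h 0)); rewrite subrr addrK. Qed.
Lemma hN a : h (- a) = - h a.
Proof. by have := hD a (-a); rewrite subrr h0 => /eqP; rewrite eq_sym addr_eq0 => /eqP ->; rewrite opprK. Qed.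
Lemma hB a b : h (a - b) = h a - h b.
Proof. by rewrite hD hN. Qed.

Definition hX (l : XL N) : XL N := omap h l.
Definition hY (l : YL N) : YL N := (l.1, h l.2).

Lemma hinj : injective h. Proof. exact: can_inj hK. Qed.
Lemma hXinj : injective hX.
Proof. by case=> [a|] [b|] //= [] /hinj ->. Qed.
Lemma hYinj : injective hY.
Proof. by case=> [k a] [l b] [] -> /hinj ->. Qed.

Lemma Xcand_perm u v :
  perm_eq (Xcand (map hX u) (map hX v)) (map hX (Xcand u v)).
Proof.
apply: perm_enum_bij; exists (omap hi) => -[a|] //=; by rewrite ?hK ?hiK.
Qed.

Lemma Ycand_perm u v :
  perm_eq (Ycand (map hY u) (map hY v)) (map hY (Ycand u v)).
Proof.
rewrite /Ycand -map_cat -map_comp /= map_allpairs.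
have -> : forall (s : seq nat) (t : seq 'Z_N), [seq hY (k, z) | k <- s, z <- t] = [seq (k, z) | k <- s, z <- map h t].
  by move=> s t; rewrite allpairs_mapr.
have e : forall l : YL N, (hY l).1 = l.1 by [].
have -> : [seq ((fun l : nat * 'Z_N => l.1.+1) \o hY) i | i <- u ++ v] = [seq l.1.+1 | l <- u ++ v] by apply: eq_map.
apply: (perm_allpairs (@pair nat 'Z_N)) => //.
by apply: perm_enum_bij; exists hi.
Qed.

Lemma contr_star_h a b c : contr_star (hY a) (hY b) (hY c) = contr_star a b c.
Proof. by rewrite /contr_star /= -(hD b.2 c.2) (inj_eq hinj). Qed.
Lemma contr_tstar_h a b c : contr_tstar (hY a) (hY b) (hY c) = contr_tstar a b c.
Proof. by rewrite /contr_tstar /= !(inj_eq hinj). Qed.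
Lemma contr_sh_h a b c : @contr_sh (XL N) (hX a) (hX b) (hX c) = contr_sh a b c.
Proof. by []. Qed.

Lemma toX_map w : toX (map hY w) = map hX (toX w).
Proof.
elim: w => [//|[k z] w IH] /=; rewrite /toX /= -/(toX _) -/(toX _) IH map_cat.
by rewrite map_rcons map_nseq.
Qed.

Lemma nextS_map w : nextS (map hX w) = h (nextS w).
Proof. by elim: w => [|[a|] w IH] //=; rewrite h0. Qed.

Lemma qword_map w : qword (map hX w) = map hX (qword w).
Proof. by elim: w => [|[a|] w IH] //=; rewrite IH // nextS_map hB. Qed.

Lemma pword_acc_map acc w : pword_acc (h acc) (map hX w) = map hX (pword_acc acc w).
Proof. elim: w acc => [|[a|] w IH] acc //=; first by rewrite -(hD acc a) IH. by rewrite IH. Qed.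

Lemma pword_map w : pword (map hX w) = map hX (pword w).
Proof. by rewrite /pword -pword_acc_map h0. Qed.

Lemma psi_star_map (psi : series (XL N)) w :
  psi_star (fun x => psi (map hX x)) w = psi_star psi (map hY w).
Proof.
rewrite /psi_star toX_map pword_map size_map all_map; congr (_ + _).
have -> : all (preim hY (eq_op^~ (0%N, 0))) w = all (eq_op^~ (0%N, 0)) w.
  apply: eq_all => l /=; have e : ((0%N, 0) : YL N) = hY (0%N, 0) by rewrite /hY /= h0.
  by rewrite {1}e (inj_eq hYinj).
by rewrite map_rcons map_nseq /= h0.
Qed.
End Zp.

Lemma sum_iota n (G : 'Z_(n.+2) -> rat) :
  \sum_(a < n.+2) G (iotaN n.+2 a.+1) = \sum_(z : 'Z_(n.+2)) G z.
Proof.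
have inj : injective (fun a : 'I_(n.+2) => (a.+1%:R : 'Z_(n.+2))).
  move=> a b /(congr1 val) /=; rewrite !val_Zp_nat // => e; apply/val_inj => /=.
  move/eqP: e; rewrite -addn1 -[b.+1]addn1 (eqn_modDr 1 a b) !modn_small // => /eqP; exact: id.
by rewrite [RHS](reindex_inj inj).
Qed.

Section T.
Variables (n : nat) (h hi : 'Z_(n.+2) -> 'Z_(n.+2)).
Hypotheses (hK : cancel h hi) (hiK : cancel hi h).
Hypothesis hD : forall a b, h (a + b) = h a + h b.

Lemma psi_tstar_map (psi : series (XL n.+2)) w :
  psi_tstar (fun x => psi (map (hX h) x)) w = psi_tstar psi (map (hY h) w).
Proof.
rewrite /psi_tstar toX_map (qword_map hD) size_map all_map; congr (_ + _).
have -> : all (preim (hY h) (fun l => l.1 == 0%N)) w = all (fun l => l.1 == 0%N) w by [].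
case: ifP => // _; congr (_ * _).
under eq_bigr do rewrite map_rcons map_nseq /=.
rewrite (sum_iota (fun z => psi (rcons (nseq (size w).-1 None) (Some (h z))))).
rewrite (sum_iota (fun z => psi (rcons (nseq (size w).-1 None) (Some z)))).
by rewrite [RHS](reindex_inj (hinj hK)).
Qed.
End T.

Section S.
Variable L : eqType.

Lemma words_over_uniq (s : seq L) n : uniq s -> uniq (words_over s n).
Proof.
move=> us; elim: n => [//|n IH] /=; apply: allpairs_uniq => //.
by move=> [a u] [b v] _ _ /= [-> ->].
Qed.

Lemma mem_words_over (s : seq L) w : all (mem s) w -> w \in words_over s (size w).
Proof.
elim: w => [//|a w IH] /= /andP [ha hw].
by apply: (allpairs_f (fun a w => a :: w)) => //; apply: IH.
Qed.
End S.

Lemma subst_map N (sigma tau : XL N -> XL N) (sK : cancel sigma tau) (tK : cancel tau sigma)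
  (psi : series (XL N)) w : subst_series sigma psi w = psi (map tau w).
Proof.
rewrite /subst_series.
have e : forall w', (map sigma w' == w) = (w' == map tau w).
  move=> w'; rewrite -{1}(mapK tK w) (inj_eq (inj_map (can_inj sK))) //.
under eq_bigl do rewrite e.
have us : uniq (words_over (Xletters N) (size w)).
  by apply: words_over_uniq; rewrite /Xletters enum_uniq.
have mw : map tau w \in words_over (Xletters N) (size w).
  rewrite -(size_map tau); apply: mem_words_over; apply/allP => x _.
  by rewrite /Xletters /= mem_enum.
rewrite (big_rem _ mw) /= eqxx big1_seq /= ?addr0 //.
move=> j /andP [/eqP -> hj]; exfalso; move: hj; by rewrite mem_rem_uniqF.
Qed.

Lemma dmr_tilde_map n (h hi : 'Z_(n.+2) -> 'Z_(n.+2)) (hK : cancel h hi) (hiK : cancel hi h)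
  (hD : forall a b, h (a + b) = h a + h b) (psi : series (XL n.+2)) :
  dmr_tilde psi -> dmr_tilde (fun w => psi (map (hX h) w)).
Proof.
case=> [[i1 i2] i3 i4 i5]; split.
- split; first exact: i1.
  by rewrite /= (reindex_inj (hinj hK)) in i2.
- apply: primitive_map => //; [exact: hXinj hK | exact: Xcand_perm hK hiK].
- by move=> a /=; rewrite i4 (hN hD).
- have -> : psi_tstar (fun w => psi (map (hX h) w)) = fun w => psi_tstar psi (map (hY h) w).
    by apply: functional_extensionality => w; rewrite (psi_tstar_map hK hD).
  apply: primitive_map => //; [exact: hYinj hK | exact: contr_tstar_h hK | exact: Ycand_perm hK hiK].
Qed.

Lemma dmr_mu_map n (h hi : 'Z_(n.+2) -> 'Z_(n.+2)) (hK : cancel h hi) (hiK : cancel hi h)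
  (hD : forall a b, h (a + b) = h a + h b) (psi : series (XL n.+2)) :
  dmr_mu psi -> dmr_mu (fun w => psi (map (hX h) w)).
Proof.
case=> [[i1 i2] i3 i4 i5]; split.
- by split; rewrite //= (h0 hD).
- apply: primitive_map => //; [exact: hXinj hK | exact: Xcand_perm hK hiK].
- by move=> a /=; rewrite i4 (hN hD).
- have -> : psi_star (fun w => psi (map (hX h) w)) = fun w => psi_star psi (map (hY h) w).
    by apply: functional_extensionality => w; rewrite (psi_star_map hK hD).
  apply: primitive_map => //; [exact: hYinj hK | exact: contr_star_h hK hD | exact: Ycand_perm hK hiK].
Qed.

Theorem proposition3p14 (N : nat) (hN : (3 <= N)%N) (g : 'Z_N)
    (hg : g \is a GRing.unit) :
  (forall psi : series (XL N), dmr_tilde psi -> dmr_tilde (delta_tilde g psi))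
  /\ (forall psi : series (XL N), dmr_mu psi -> dmr_mu (delta_mu g psi)).
Proof.
case: N hN g hg => [|[|[|n]]] // _ g hg; split=> psi P.
- have -> : delta_tilde g psi = fun w => psi (map (hX (fun z => g^-1 * z)) w).
    apply: functional_extensionality => w; apply: subst_map.
      by case=> [a|] //=; rewrite mulKr.
    by case=> [a|] //=; rewrite mulVKr.
  apply: (@dmr_tilde_map n.+1 _ (fun z => g * z)) => //.
  + by move=> z; rewrite mulVKr.
  + by move=> z; rewrite mulKr.
  + by move=> a b; rewrite mulrDr.
- have eg : forall z : 'Z_(n.+3), z *+ iotaN_inv g = z * g.
    move=> z; rewrite -mulr_natr; congr (_ * _); rewrite /iotaN_inv.
    case: eqP => [g0|_]; last exact: natr_Zp.
    have -> : g = 0 by apply: val_inj.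
    have := @val_Zp_nat n.+3 isT n.+3; rewrite modnn => e; apply: val_inj; exact: e.
  have -> : delta_mu g psi = fun w => psi (map (hX (fun z => z * g^-1)) w).
    apply: functional_extensionality => w; apply: subst_map.
      by case=> [a|] //=; rewrite eg mulrK.
    by case=> [a|] //=; rewrite eg mulrVK.
  apply: (@dmr_mu_map n.+1 _ (fun z => z * g)) => //.
  + by move=> z; rewrite mulrVK.
  + by move=> z; rewrite mulrK.
  + by move=> a b; rewrite mulrDl.
Qed.
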